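(* Let $G$ be a Lindelöf Hausdorff topological group whose underlying space is basically disconnected. Then either $G$ is a $P$-space, or $G$ has a nondiscrete topological quotient group $G/N$ (with $N$ a closed normal subgroup) of countable pseudocharacter which contains an open subgroup that is Boolean and basically disconnected.
   Context: All spaces are Tychonoff. A space is basically disconnected if the closure of every cozero set in it is open. A space is a $P$-space if every $G_\delta$-subset is open. For a topological group, countable pseudocharacter means the identity element is a $G_\delta$-set. A group is Boolean if every element has order at most $2$. The quotient $G/N$ carries the quotient topology. *)

(* Defs.v *)
From HB Require Import structures.
From mathcomp Require Import all_boot all_order all_algebra.
From mathcomp Require Import all_classical all_reals all_analysis.
From mathcomp Require Import Rstruct Rstruct_topology.
From Stdlib Require Import Reals.

Set Implicit Arguments.
Unset Strict Implicit.
Unset Printing Implicit Defensive.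

Local Open Scope classical_set_scope.

Definition is_group (G : Type) (mul : G -> G -> G) (inv : G -> G) (e : G) :=
  [/\ forall x y z, mul x (mul y z) = mul (mul x y) z,
      forall x, mul e x = x, forall x, mul x e = x,
      forall x, mul (inv x) x = e & forall x, mul x (inv x) = e].

Definition topological_group (G : topologicalType) (mul : G -> G -> G)
    (inv : G -> G) (e : G) :=
  [/\ is_group mul inv e,
      continuous (fun p : G * G => mul p.1 p.2) & continuous inv].

Definition lindelof (T : topologicalType) :=
  forall (I : Type) (U : I -> set T), (forall i, open (U i)) ->
    \bigcup_i U i = setT ->
    exists J : set I, countable J /\ \bigcup_(i in J) U i = setT.

Definition cozero (T : topologicalType) (f : T -> R) := [set x | f x <> 0%R].

Definition basically_disconnected (T : topologicalType) :=
  forall f : T -> R, continuous f -> open (closure (cozero f)).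

Definition G_delta (T : topologicalType) (A : set T) :=
  exists F : nat -> set T, (forall n, open (F n)) /\ A = \bigcap_n F n.

Definition P_space (T : topologicalType) :=
  forall A : set T, G_delta A -> open A.

Definition discrete_top (T : topologicalType) := forall A : set T, open A.

Definition subgroup (G : Type) (mul : G -> G -> G) (inv : G -> G) (e : G)
    (K : set G) :=
  [/\ K e, forall x y, K x -> K y -> K (mul x y) & forall x, K x -> K (inv x)].

Definition normal_subgroup (G : Type) (mul : G -> G -> G) (inv : G -> G) (e : G)
    (N : set G) :=
  subgroup mul inv e N /\ forall g x, N x -> N (mul (mul g x) (inv g)).

Definition group_hom (G H : Type) (mulG : G -> G -> G) (mulH : H -> H -> H)
    (f : G -> H) := forall x y, f (mulG x y) = mulH (f x) (f y).

Definition open_map (T U : topologicalType) (f : T -> U) :=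
  forall A : set T, open A -> open (f @` A).

(** [H] (with its operations) is (topologically isomorphic to) the quotient
    group G/N with the quotient topology, witnessed by [f]: a continuous open
    surjective homomorphism with kernel N.  (A continuous open surjection is a
    quotient map, so H carries the quotient topology of G/N.) *)
Definition quotient_group_by (G H : topologicalType)
    (mulG : G -> G -> G) (mulH : H -> H -> H) (eH : H) (N : set G) (f : G -> H) :=
  [/\ group_hom mulG mulH f, continuous f, open_map f,
      (forall y, exists x, f x = y) & N = f @^-1` [set eH]].

Definition countable_pseudocharacter (H : topologicalType) (eH : H) :=
  G_delta [set eH].

Definition boolean_set (H : Type) (mul : H -> H -> H) (e : H) (K : set H) :=
  forall x, K x -> mul x x = e.

(* Main.v *)
Require Import Defs.
From Stdlib Require Import Lia.
From HB Require Import structures.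
From mathcomp Require Import all_boot all_order all_algebra.
From mathcomp Require Import all_classical all_reals all_analysis.
From mathcomp Require Import Rstruct Rstruct_topology.
From Stdlib Require Import Reals.
From mathcomp Require Import lra zify.
From Stdlib Require Import ClassicalEpsilon.
Import Order.TTheory GRing.Theory Num.Theory Num.Def.
Local Open Scope classical_set_scope.
Local Open Scope ring_scope.
Set Implicit Arguments.
Unset Strict Implicit.
Unset Printing Implicit Defensive.

Section Grp.
Context (T : Type) (mul : T -> T -> T) (inv : T -> T) (e : T).
Hypothesis g : is_group mul inv e.

Lemma gA x y z : mul x (mul y z) = mul (mul x y) z. Proof. by case: g. Qed.
Lemma g1x x : mul e x = x. Proof. by case: g. Qed.
Lemma gx1 x : mul x e = x. Proof. by case: g. Qed.
Lemma gVx x : mul (inv x) x = e. Proof. by case: g. Qed.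
Lemma gxV x : mul x (inv x) = e. Proof. by case: g. Qed.
Lemma gKl x y : mul (inv x) (mul x y) = y. Proof. by rewrite gA gVx g1x. Qed.
Lemma gKl' x y : mul x (mul (inv x) y) = y. Proof. by rewrite gA gxV g1x. Qed.
Lemma gKr x y : mul (mul y x) (inv x) = y. Proof. by rewrite -gA gxV gx1. Qed.
Lemma gKr' x y : mul (mul y (inv x)) x = y. Proof. by rewrite -gA gVx gx1. Qed.
Lemma ginv_uniq x y : mul x y = e -> y = inv x.
Proof. by move=> h; rewrite -[y](gKl x) h gx1. Qed.
Lemma ginvK x : inv (inv x) = x.
Proof. by symmetry; apply: ginv_uniq; rewrite gVx. Qed.
Lemma ginvM x y : inv (mul x y) = mul (inv y) (inv x).
Proof. by symmetry; apply: ginv_uniq; rewrite -gA gKl' gxV. Qed.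
Lemma ginv1 : inv e = e.
Proof. by symmetry; apply: ginv_uniq; rewrite g1x. Qed.
Lemma ginv_inj x y : inv x = inv y -> x = y.
Proof. by move=> h; rewrite -(ginvK x) h ginvK. Qed.
End Grp.

Lemma cont_nbhs (S U : topologicalType) (f : S -> U) x y A :
  {for x, continuous f} -> f x = y -> nbhs y A -> nbhs x (f @^-1` A).
Proof. by move=> c <-; apply: c. Qed.

Section TG.
Context (T : topologicalType) (mul : T -> T -> T) (inv : T -> T) (e : T).
Hypothesis tg : topological_group mul inv e.
Let g : is_group mul inv e. Proof. by case: tg. Qed.

Lemma mul_nbhs x y A : nbhs (mul x y) A ->
  exists Q R, [/\ nbhs x Q, nbhs y R & forall a b, Q a -> R b -> A (mul a b)].
Proof.
move=> hA; case: tg => _ cm _.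
have := cm (x, y) A hA.
case=> -[Q R] /= [nQ nR] sub.
by exists Q, R; split => // a b Qa Rb; apply: (sub (a, b)).
Qed.

Lemma lmul_cont a : continuous (mul a).
Proof.
move=> x A hA; have [Q [R [nQ nR s]]] := mul_nbhs hA.
by apply: filterS nR => b Rb; apply: s => //; apply: nbhs_singleton.
Qed.

Lemma rmul_cont a : continuous (fun x => mul x a).
Proof.
move=> x A hA; have [Q [R [nQ nR s]]] := mul_nbhs hA.
by apply: filterS nQ => b Qb; apply: s => //; apply: nbhs_singleton.
Qed.

Lemma inv_cont : continuous inv.
Proof. by case: tg. Qed.

Lemma nbhs_sq U : nbhs e U ->
  exists V, nbhs e V /\ forall a b, V a -> V b -> U (mul a b).
Proof.
rewrite -{1}(g1x g e) => /mul_nbhs [Q [R [nQ nR s]]].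
exists (Q `&` R); split; first exact: filterI.
by move=> a b [] ? _ [] _ ?; apply: s.
Qed.

Lemma nbhs_lmul x U : nbhs e U -> nbhs x [set y | U (mul (inv x) y)].
Proof. exact/cont_nbhs/(gVx g)/lmul_cont. Qed.

Lemma nbhs_inv U : nbhs e U -> nbhs e [set y | U (inv y)].
Proof. exact/cont_nbhs/(ginv1 g)/inv_cont. Qed.

Definition gent (E : set (T * T)) :=
  exists U, nbhs e U /\ forall x y, U (mul (inv x) y) -> E (x, y).

Lemma gent_filter : Filter gent.
Proof.
split.
- by exists setT; split => //; apply: filterT.
- move=> P Q [U [nU sU]] [V [nV sV]]; exists (U `&` V); split; first exact: filterI.
  by move=> x y [] ? ?; split; [apply: sU|apply: sV].
- by move=> P Q PQ [U [nU sU]]; exists U; split => // x y /sU /PQ.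
Qed.
End TG.
Section TG2.
Context (T : topologicalType) (mul : T -> T -> T) (inv : T -> T) (e : T).
Hypothesis tg : topological_group mul inv e.
Let g : is_group mul inv e. Proof. by case: tg. Qed.
Local Open Scope relation_scope.
Lemma gent_diag A : gent mul inv e A -> diagonal `<=` A.
Proof.
case=> U [nU sU] [x y]; rewrite /diagonal /= => <-; apply: sU; rewrite (gVx g).
exact: nbhs_singleton.
Qed.
Lemma gent_inv A : gent mul inv e A -> gent mul inv e A^-1.
Proof.
case=> U [nU sU]; exists [set y | U (inv y)]; split; first exact: (nbhs_inv tg).
move=> x y /= h; have := sU y x; apply; move: h; by rewrite (ginvM g) (ginvK g).
Qed.
Lemma gent_split A : gent mul inv e A -> exists2 B, gent mul inv e B & B \; B `<=` A.
Proof.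
case=> U [nU sU]; have [V [nV sV]] := nbhs_sq tg nU.
exists [set xy | V (mul (inv xy.1) xy.2)]; first by exists V; split.
move=> [x z] /= [y /= h1 h2]; apply: sU.
have -> : mul (inv x) z = mul (mul (inv x) y) (mul (inv y) z) by rewrite -(gA g) (gKl' g).
exact: sV.
Qed.
End TG2.

Definition gU (T : topologicalType) (mul : T -> T -> T) (inv : T -> T) (e : T)
  (tg : topological_group mul inv e) : Type := T.
HB.instance Definition _ (T : topologicalType) (mul : T -> T -> T) (inv : T -> T) (e : T)
  (tg : topological_group mul inv e) := Choice.on (gU tg).
HB.instance Definition _ (T : topologicalType) (mul : T -> T -> T) (inv : T -> T) (e : T)
  (tg : topological_group mul inv e) :=
  @isUniform.Build (gU tg) (gent mul inv e) (gent_filter mul inv e) (@gent_diag _ _ _ _ tg)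
   (@gent_inv _ _ _ _ tg) (@gent_split _ _ _ _ tg).

Lemma tg_urysohn (T : topologicalType) (mul : T -> T -> T) (inv : T -> T) (e : T)
  (tg : topological_group mul inv e) (x : T) (B : set T) :
  closed B -> ~ B x -> exists f : T -> R,
  [/\ continuous f, f x = 0 & forall y, B y -> f y = 1].
Proof.
move=> cB nBx.
have g : is_group mul inv e by case: tg.
have us : uniform_separator [set x] B.
  have nC : nbhs x (~` B) by apply: open_nbhs_nbhs; split => //; exact: closed_openC.
  have : nbhs e [set z | (~` B) (mul x z)].
    by apply: (cont_nbhs (@lmul_cont _ _ _ _ tg x e)) => //; rewrite (gx1 g).
  move=> nU.
  exists (Uniform.class (gU tg)), [set xy | (~` B) (mul x (mul (inv xy.1) xy.2))].
  split.
  - by exists [set z | (~` B) (mul x z)]; split.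
  - apply/seteqP; split => // -[a b] [] [/= -> Bb].
    by rewrite (gKl' g).
  - move=> z A /= [E [U [nU' sU]] sE].
    apply: filterS (nbhs_lmul tg z nU') => y Uy; apply: sE; apply/xsectionP; exact: sU.
have [f [cf _ f0 f1]] := (@uniform_separatorP T R _ _).1 us.
exists f; split => //.
  by apply: f0; exists x.
by move=> y By; apply: f1; exists y.
Qed.

Lemma cozeroP (T : topologicalType) (f : T -> R) x : cozero f x <-> f x <> 0.
Proof. by []. Qed.

Lemma tg_clopen (T : topologicalType) (mul : T -> T -> T) (inv : T -> T) (e : T)
  (tg : topological_group mul inv e) : basically_disconnected T ->
  forall x U, nbhs x U -> exists C : set T, [/\ open C, closed C, C x & C `<=` U].
Proof.
move=> bd x U nU.
have cB : closed (~` U°) by apply: open_closedC; exact: open_interior.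
have nBx : ~ (~` U°) x by move=> /(_ nU).
have [f [cf fx fB]] := tg_urysohn tg cB nBx.
pose phi := fun y => (Order.min (f y) (1/2) - 1/2).
have cphi : continuous phi.
  move=> y; rewrite /phi.
 apply: (@continuousB R R^o T (fun y => Order.min (f y) (1/2)) (fun=> 1/2) y).
    exact: (@continuous_min R T f (fun=> 1/2) y (cf y) (cvg_cst _)).
  exact: cvg_cst.
exists (closure (cozero phi)); split.
- exact: bd.
- exact: closed_closure.
- apply: subset_closure; apply/cozeroP; rewrite /phi fx min_l; last by lra.
  move=> h; lra.
- move=> y cy; apply: contrapT => nUy.
  have By : (~` U°) y by move=> /interior_subset.
  have := fB y By => fy1.
  have ny : nbhs y (f @^-1` [set t | 1/2 < t]).
    apply: (cont_nbhs (cf y) erefl); apply: open_nbhs_nbhs; split; first exact: open_gt.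
    rewrite /= fy1; lra.
  have [z [/= cz fz]] := cy _ ny.
  apply: (cz); rewrite /phi min_r ?subrr //; exact: ltW.
Qed.

Lemma ex_min_nat (P : nat -> Prop) : (exists k, P k) ->
  exists k, P k /\ forall j, (j < k)%nat -> ~ P j.
Proof.
case=> k Pk; apply: contrapT => H.
suff : forall n j, (j <= n)%nat -> ~ P j by move=> /(_ k k (leqnn k)).
elim=> [|n IH] j.
  rewrite leqn0 => /eqP -> P0; apply: H; exists 0%nat; split => //.
rewrite leq_eqVlt => /orP [/eqP ->|jn] Pj; last by apply: (IH j) => //; rewrite -ltnS.
apply: H; exists n.+1; split => // j' j'n; apply: IH; by rewrite -ltnS.
Qed.

Section Disj.
Context (T : topologicalType) (h : T -> T) (c : nat -> set T).
Hypotheses (hK : forall x, h (h x) = x) (hc : continuous h)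
  (oc : forall k, open (c k)) (cc : forall k, closed (c k))
  (ac : forall k y, c k y -> ~ c k (h y)).

Definition dE k := [set y | exists2 j, (j < k)%nat & (c j y \/ c j (h y))].
Definition dD k := c k `&` ~` dE k.
Definition dA := \bigcup_k dD k.

Lemma dE_clopen k : open (dE k) /\ closed (dE k).
Proof.
elim: k => [|k [IHo IHc]].
  have -> : dE 0 = set0 by apply/seteqP; split => y // [].
  by split; [exact: open0|exact: closed0].
have -> : dE k.+1 = dE k `|` (c k `|` h @^-1` c k).
  apply/seteqP; split => y.
    case=> j jk hj; move: jk; rewrite ltnS leq_eqVlt => /orP [/eqP ej|jk].
      by subst j; right.
    by left; exists j.
  case=> [[j jk hj]|[ck|ck]]; [exists j => //; exact: ltnW| exists k => //; by left|exists k => //; by right].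
split.
- apply: openU => //; apply: openU => //; apply: open_comp => // x _; exact: hc.
- apply: closedU => //; apply: closedU => //; apply: preimage_closed => // x _; exact: hc.
Qed.

Lemma dD_open k : open (dD k).
Proof. by apply: openI => //; apply: closed_openC; case: (dE_clopen k). Qed.

Lemma dD_closed k : closed (dD k).
Proof. by apply: closedI => //; apply: open_closedC; case: (dE_clopen k). Qed.

Lemma dD_uniq k m y : dD k y -> dD m y -> k = m.
Proof.
move=> [ck nk] [cm nm]; case: (ltngtP k m) => // km.
  by exfalso; apply: nm; exists k => //; left.
by exfalso; apply: nk; exists m => //; left.
Qed.

Lemma dA_disj y : dA y -> ~ dA (h y).
Proof.
move=> [k _ [ck nk]] [m _ [cm nm]]; case: (ltngtP k m) => km.
- by apply: nm; exists k => //; right; rewrite hK.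
- by apply: nk; exists m => //; right.
- by subst; exact: (ac ck).
Qed.

Lemma dA_cover y : (exists k, c k y) -> dA y \/ dA (h y).
Proof.
case=> k ck.
have [k0 [h0 min0]] := @ex_min_nat (fun k => c k y \/ c k (h y)) (ex_intro _ k (or_introl ck)).
case: h0 => ck0.
  left; exists k0 => //; split => // -[j jk hj]; exact: (min0 j).
right; exists k0 => //; split => // -[j jk hj]; apply: (min0 j jk).
by rewrite hK in hj; case: hj; [right|left].
Qed.

Definition dphi (y : T) : R :=
  match pselect (exists k, dD k y) with
  | left p => 1 / (projT1 (cid p)).+1%:R
  | right _ => 0
  end.

Lemma dphi_in k y : dD k y -> dphi y = 1 / k.+1%:R.
Proof.
move=> dk; rewrite /dphi; case: pselect => [p|np]; last by exfalso; apply: np; exists k.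
by case: (cid p) => j /= dj; rewrite (dD_uniq dj dk).
Qed.

Lemma dphi_out y : (forall k, ~ dD k y) -> dphi y = 0.
Proof.
move=> nk; rewrite /dphi; case: pselect => // -[k dk]; by exfalso; apply: (nk k).
Qed.

Lemma cozero_dphi : cozero dphi = dA.
Proof.
apply/seteqP; split => y.
  move/cozeroP; case: (pselect (exists k, dD k y)) => [[k dk]|nk] hy.
    by exists k.
  by exfalso; apply: hy; apply: dphi_out => k dk; apply: nk; exists k.
case=> k _ dk; apply/cozeroP; rewrite (dphi_in dk).
by rewrite mul1r; apply/eqP; rewrite invr_eq0 pnatr_eq0.
Qed.

Lemma dphi_cont : continuous dphi.
Proof.
move=> y; case: (pselect (exists k, dD k y)) => [[k dk]|nk].
  move=> P /=; rewrite (dphi_in dk) => nP.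
  have nD : nbhs y (dD k) by apply: open_nbhs_nbhs; split => //; exact: dD_open.
  apply: filterS nD => z dz /=; rewrite (dphi_in dz); exact: nbhs_singleton nP.
have nk' : forall k, ~ dD k y by move=> k dk; apply: nk; exists k.
move=> P /=; rewrite (dphi_out nk') => /nbhs_ballP [eps /= eps0 sub].
pose K := Num.truncn (eps^-1).
have nN : forall n, nbhs y (fun z => forall k, (k <= n)%nat -> ~ dD k z).
  elim=> [|n IH].
    have : nbhs y (~` dD 0) by apply: open_nbhs_nbhs; split => //; [apply: closed_openC; exact: dD_closed|exact: nk'].
    by apply: filterS => z nz k; rewrite leqn0 => /eqP ->.
  have : nbhs y (~` dD n.+1) by apply: open_nbhs_nbhs; split => //; [apply: closed_openC; exact: dD_closed|exact: nk'].
  move=> /(filterI IH); apply: filterS => z [h1 h2] k; rewrite leq_eqVlt => /orP[/eqP ->//|].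
  by rewrite ltnS; exact: h1.
apply: filterS (nN K) => z hz /=; apply: sub.
case: (pselect (exists k, dD k z)) => [[k dk]|nz].
  rewrite (dphi_in dk) /ball /= sub0r normrN ger0_norm; last by rewrite mul1r invr_ge0 ler0n.
  have kK : (K < k)%nat by rewrite ltnNge; apply/negP => kK; exact: (hz k kK).
  rewrite ltr_pdivrMr ?ltr0n // -ltr_pdivrMl //  mulr1.
  apply: lt_le_trans (truncnS_gt _) _; rewrite ler_nat; exact: ltnW.
rewrite dphi_out; first by rewrite /ball /= subr0 normr0.
by move=> k dk; apply: nz; exists k.
Qed.
End Disj.

Lemma countable_enum (T : Type) (t0 : T) (J : set T) : countable J ->
  exists g : nat -> T, J `<=` range g.
Proof.
move=> /countable_injP [f finj].
pose g := fun n => epsilon (inhabits t0) (fun x => J x /\ f x = n).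
exists g => x Jx; exists (f x) => //.
have : exists y, J y /\ f y = f x by exists x.
move=> /(epsilon_spec (inhabits t0)) [Jy fy].
by apply: finj; rewrite ?inE.
Qed.

Lemma bool_nbhs (T : topologicalType) (mul : T -> T -> T) (inv : T -> T) (e : T)
  (tg : topological_group mul inv e) :
  lindelof T -> basically_disconnected T -> closed [set e] -> G_delta [set e] ->
  exists B, nbhs e B /\ forall x, B x -> mul x x = e.
Proof.
move=> lT bd ce [W [oW eW]].
have g : is_group mul inv e by case: tg.
pose O := [set x | mul x x <> e].
have step1 : forall x, exists C, O x ->
    [/\ open C, closed C, C x & forall y, C y -> ~ C (inv y)].
  move=> x; case: (pselect (O x)) => Ox; last by exists set0.
  have nx : nbhs (mul x x) (~` [set e]).
    by apply: open_nbhs_nbhs; split; [exact: closed_openC|].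
  have [Q [R' [nQ nR s]]] := mul_nbhs tg nx.
  have [C [oC cC Cx CP]] := tg_clopen tg bd (filterI nQ nR).
  exists C => _; split => // y Cy Ciy.
  have [Qi _] := CP _ Ciy; have [_ Ry] := CP _ Cy.
  by apply: (s _ _ Qi Ry); rewrite (gVx g).
have [cf hcf] := @choice _ _ _ step1.
have csq : continuous (fun x => mul x x).
  move=> x A /= nA; have [Q [R' [nQ nR s]]] := mul_nbhs tg nA.
  by apply: filterS (filterI nQ nR) => y [Qy Ry]; exact: s.
have We : forall n, W n e by move=> n; have : [set e] e by []; rewrite eW; exact.
pose K n := [set x | ~ W n (mul x x)].
have cK : forall n, closed (K n).
  move=> n; apply: (@preimage_closed _ _ (fun x => mul x x) (~` W n)).
    by move=> x _; exact: csq.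
  exact: open_closedC.
pose U n i := if `[< O i >] then cf i else ~` K n.
have hJ : forall n, exists J : set T, countable J /\ \bigcup_(i in J) U n i = setT.
  move=> n; apply: lT.
    move=> i; rewrite /U; case: asboolP => Oi; first by case: (hcf i Oi).
    exact: closed_openC.
  apply/seteqP; split => // y _.
  case: (pselect (K n y)) => Ky.
    have Oy : O y by move=> yy; apply: Ky; rewrite yy.
    exists y => //; rewrite /U; case: asboolP => // _; by case: (hcf y Oy).
  exists e => //; rewrite /U; case: asboolP => // Oe; exfalso; apply: Oe; exact: (g1x g).
have [Jf hJf] := @choice _ _ _ hJ.
have hen : forall n, exists gn : nat -> T, Jf n `<=` range gn.
  by move=> n; apply: (countable_enum e); case: (hJf n).
have [gf hgf] := @choice _ _ _ hen.
pose c k := match (@unpickle (nat * nat)%type k) with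
  | Some (n, m) => if `[< O (gf n m) >] then cf (gf n m) else set0
  | None => set0 end.
have oc : forall k, open (c k).
  move=> k; rewrite /c; case: unpickle => [[n m]|]; last exact: open0.
  by case: asboolP => [Oi|_]; [case: (hcf _ Oi)|exact: open0].
have cc : forall k, closed (c k).
  move=> k; rewrite /c; case: unpickle => [[n m]|]; last exact: closed0.
  by case: asboolP => [Oi|_]; [case: (hcf _ Oi)|exact: closed0].
have ac : forall k y, c k y -> ~ c k (inv y).
  move=> k y; rewrite /c; case: unpickle => [[n m]|] //.
  by case: asboolP => [Oi|_] //; case: (hcf _ Oi) => _ _ _; apply.
have cover : forall y, O y -> exists k, c k y.
  move=> y Oy.
  have [n nW] : exists n, ~ W n (mul y y).
    apply: contrapT => hn; apply: Oy.
    have : (\bigcap_n W n) (mul y y) by move=> n _; apply: contrapT => h; apply: hn; exists n.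
    by rewrite -eW.
  have : setT y by [].
  rewrite -(proj2 (hJf n)) => -[i Ji Uiy].
  have [m _ im] := hgf n i Ji.
  exists (pickle (n, m)); rewrite /c pickleK im.
  by move: Uiy; rewrite /U; case: asboolP => // _ /(_ nW).
have hK : forall x, inv (inv x) = x by exact: (ginvK g).
have hc : continuous inv by exact: (inv_cont tg).
have he : inv e = e by exact: (ginv1 g).
pose A := dA inv c.
have oA : open A by apply: bigcup_open => k _; exact: dD_open.
have oiA : open (inv @^-1` A) by apply: open_comp => // x _; exact: hc.
have ocA : open (closure A).
  by rewrite /A -(cozero_dphi inv c); apply: bd; exact: dphi_cont.
have cl_inv : forall S, closure S e -> closure (inv @^-1` S) e.
  move=> S cS Q nQ.
  have nQ' : nbhs e (inv @^-1` Q) by apply: (cont_nbhs (hc e) he nQ).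
  have [a [Sa Qia]] := cS _ nQ'.
  by exists (inv a); split => //=; rewrite hK.
have nclA : ~ closure A e.
  move=> cAe.
  have := cl_inv _ cAe (closure A) (open_nbhs_nbhs (conj ocA cAe)).
  case=> z [/= Az cAz].
  have [a [Aa iAa]] := cAz _ (open_nbhs_nbhs (conj oiA Az)).
  exact: (dA_disj hK ac Aa iAa).
have nclO : ~ closure O e.
  move=> cOe.
  have : closure (A `|` inv @^-1` A) e.
    apply: closureS cOe => y Oy; exact: (dA_cover hK (cover y Oy)).
  rewrite closureU => -[//|ciA]; apply: nclA.
  have := cl_inv _ ciA; apply: closureS => y /= ; by rewrite hK.
exists (~` closure O); split.
  by apply: open_nbhs_nbhs; split => //; apply: closed_openC; exact: closed_closure.
move=> x nx; apply: contrapT => hx; apply: nx; exact: subset_closure.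
Qed.


Lemma bd_clopen_sub (T : topologicalType) (K : set T) :
  basically_disconnected T -> open K -> closed K -> basically_disconnected (set_type K).
Proof.
move=> bd oK cK f cf.
pose F : T -> R := valL f.
have Fval : forall z, F (set_val z) = f z.
  by move=> z; have := congr1 (@^~ z) (valLK 0 f).
have Fout : forall x, ~ K x -> F x = 0.
  move=> x nKx; rewrite /F /valL_ /= oinv_set_val /= insubN //.
  by apply/negP => /set_mem.
have cF : continuous F.
  move=> x; case: (pselect (K x)) => Kx.
    have : {in K, continuous F}.
      rewrite -continuous_open_subspace //; exact: (@subspace_valL_continuousP _ K _ f).2.
    by apply; exact: mem_set.
  move=> P /=; rewrite (Fout _ Kx) => nP.
  have : nbhs x (~` K) by apply: open_nbhs_nbhs; split => //; exact: closed_openC.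
  by apply: filterS => y nKy /=; rewrite Fout //; exact: nbhs_singleton nP.
have ocl := bd F cF.
have -> : closure (cozero f) = set_val @^-1` closure (cozero F).
  apply/seteqP; split => z.
    move=> cz P nP.
    have nP' : nbhs z (set_val @^-1` P) by exact: initial_continuous.
    have [q [/= fq Pq]] := cz _ nP'.
    by exists (set_val q); split => //; apply/cozeroP; rewrite Fval.
  move=> /= cz Q nQ.
  have Kz : K (set_val z) by exact: set_valP.
  move: nQ; rewrite subspace_subtypeP /nbhs /= -nbhs_subspace_in // => nQ.
  have [y [/cozeroP Fy hy]] := cz _ nQ.
  have Ky : K y by apply: contrapT => nKy; apply: Fy; exact: Fout.
  have [q Qq qy] := hy Ky.
  by exists q; split => //; apply/cozeroP; rewrite -Fval qy.
move: ocl; apply: open_comp => x _; exact: initial_continuous.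
Qed.


Section Grp2.
Context (T : Type) (mul : T -> T -> T) (inv : T -> T) (e : T).
Hypothesis g : is_group mul inv e.

Lemma centr_sub (X : set T) :
  subgroup mul inv e [set x | forall w, X w -> mul x w = mul w x].
Proof.
split => [w _|x y hx hy w Xw|x hx w Xw] /=; first by rewrite (g1x g) (gx1 g).
  by rewrite -(gA g) hy // (gA g) hx // (gA g).
have e1 : mul (inv x) w = mul (mul (inv x) (mul w x)) (inv x).
  by rewrite (gA g) (gKr g).
by rewrite e1 -hx // (gKl g).
Qed.

Lemma sq_inv x : mul x x = e -> inv x = x.
Proof. by move=> h; symmetry; apply: (ginv_uniq g). Qed.

Lemma comm_of_sq x y : mul x x = e -> mul y y = e -> mul (mul x y) (mul x y) = e ->
  mul x y = mul y x.
Proof.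
move=> hx hy hxy.
by rewrite -(sq_inv hxy) (ginvM g) (sq_inv hx) (sq_inv hy).
Qed.
End Grp2.

Lemma bool_subgroup (T : topologicalType) (mul : T -> T -> T) (inv : T -> T) (e : T)
  (tg : topological_group mul inv e) :
  basically_disconnected T -> (exists B, nbhs e B /\ forall x, B x -> mul x x = e) ->
  exists K : set T, [/\ subgroup mul inv e K, open K, boolean_set mul e K &
                basically_disconnected (set_type K)].
Proof.
move=> bd [B [nB hB]].
have g : is_group mul inv e by case: tg.
have [V [nV sV]] := nbhs_sq tg nB.
have Ve : V e := nbhs_singleton nV.
have Vsq : forall a, V a -> mul a a = e.
  by move=> a Va; have := hB _ (sV _ _ Va Ve); rewrite (gx1 g).
have Vcomm : forall a b, V a -> V b -> mul a b = mul b a.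
  by move=> a b Va Vb; apply: (comm_of_sq g); [exact: Vsq|exact: Vsq|apply: hB; exact: sV].
pose K := [set x | forall S, subgroup mul inv e S -> V `<=` S -> S x].
have sK : subgroup mul inv e K.
  split => [S [] //|x y Kx Ky S sS VS|x Kx S sS VS].
    by case: (sS) => _ hm _; apply: hm; [exact: Kx|exact: Ky].
  by case: (sS) => _ _ hi; apply: hi; exact: Kx.
have VK : V `<=` K by move=> x Vx S _; apply.
have KC : forall k w, K k -> V w -> mul k w = mul w k.
  move=> k w Kk Vw; apply: (Kk _ (centr_sub g V)) => // a Va b Vb; exact: Vcomm.
have KZ : forall k k', K k -> K k' -> mul k k' = mul k' k.
  move=> k k' Kk Kk'; apply: (Kk _ (centr_sub g K)) => // w Vw b Kb.
  by symmetry; apply: KC.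
have Kbool : forall x, K x -> mul x x = e.
  move=> x Kx.
  suff : (K `&` [set x | mul x x = e]) x by case.
  apply: Kx; last by move=> a Va; split; [exact: VK|exact: Vsq].
  split.
  - by split; [case: sK|rewrite /= (g1x g)].
  - move=> a b [Ka ha] [Kb hb]; split; first by case: sK => _ + _; apply.
    by rewrite /= -(gA g) [mul b (mul a b)](gA g) -(KZ _ _ Ka Kb) -[mul (mul a b) b](gA g) hb (gx1 g).
  - move=> a [Ka ha]; rewrite (sq_inv g ha); by split.
have oK : open K.
  rewrite openE => x Kx; apply: filterS (nbhs_lmul tg x nV) => y /= Vy.
  rewrite -[y](gKl' g x); case: sK => _ hm _; apply: hm => //; exact: VK.
have cK : closed K.
  move=> x cx; have [k [Kk /= Vk]] := cx _ (nbhs_lmul tg x nV).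
  have -> : x = mul k (inv (mul (inv x) k)) by rewrite (ginvM g) (ginvK g) (gKl' g).
  by case: sK => _ hm hi; apply: hm => //; apply: hi; exact: VK.
exists K; split => //.
exact: bd_clopen_sub.
Qed.

Local Open Scope quotient_scope.

Section Quot.
Context (G : topologicalType) (mul : G -> G -> G) (inv : G -> G) (e : G).
Hypothesis tg : topological_group mul inv e.
Context (N : set G).
Hypotheses (cN : closed N) (nN : normal_subgroup mul inv e N).
Let g : is_group mul inv e. Proof. by case: tg. Qed.

Let Ne : N e. Proof. by case: nN => -[]. Qed.
Let NM x y : N x -> N y -> N (mul x y). Proof. by case: nN => -[_ h _] _; apply: h. Qed.
Let NV x : N x -> N (inv x). Proof. by case: nN => -[_ _ h] _; apply: h. Qed.
Let NJ a x : N x -> N (mul (mul a x) (inv a)). Proof. by case: nN => _; apply. Qed.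

Definition rN : rel G := fun x y => `[< N (mul (inv x) y) >].
Lemma rN_refl : reflexive rN.
Proof. by move=> x; rewrite /rN; apply/asboolP; rewrite (gVx g); exact: Ne. Qed.
Lemma rN_sym : symmetric rN.
Proof.
move=> x y; rewrite /rN; apply/asboolP/asboolP => h; have := NV h;
  by rewrite (ginvM g) (ginvK g).
Qed.
Lemma rN_trans : transitive rN.
Proof.
move=> y x z; rewrite /rN => /asboolP h1 /asboolP h2; apply/asboolP.
by have := NM h1 h2; rewrite -(gA g) (gKl' g).
Qed.

Definition erN := EquivRel rN rN_refl rN_sym rN_trans.
Definition HN := quotient_topology {eq_quot erN}.
Definition piN : G -> HN := \pi_HN.

Lemma piNP x y : piN x = piN y <-> N (mul (inv x) y).
Proof.
split; first by move/eqmodP => /asboolP.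
by move=> h; apply/eqmodP; apply/asboolP.
Qed.

Lemma piN_repr (a : HN) : piN (repr a) = a.
Proof. exact: reprK. Qed.

Lemma piN_surj (a : HN) : exists x, a = piN x.
Proof. by exists (repr a); rewrite piN_repr. Qed.

Definition mulH (a b : HN) : HN := piN (mul (repr a) (repr b)).
Definition invH (a : HN) : HN := piN (inv (repr a)).
Definition eH : HN := piN e.

Lemma piN_mul x y : piN (mul x y) = mulH (piN x) (piN y).
Proof.
rewrite /mulH; apply/piNP.
have /piNP h1 := piN_repr (piN x); have /piNP h2 := piN_repr (piN y).
set x' := repr (piN x) in h1 *; set y' := repr (piN y) in h2 *.
have := NM (NJ (inv y) (NV h1)) (NV h2).
by rewrite ?(ginvM g) ?(ginvK g) -?(gA g) ?(gKl' g).
Qed.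

Lemma piN_inv x : piN (inv x) = invH (piN x).
Proof.
rewrite /invH; apply/piNP.
have /piNP h1 := piN_repr (piN x).
set x' := repr (piN x) in h1 *.
have := NJ x h1.
by rewrite ?(ginvM g) ?(ginvK g) -?(gA g) ?(gKl' g) ?(gxV g) ?(gx1 g).
Qed.

Lemma HN_group : is_group mulH invH eH.
Proof.
split.
- move=> a b c; have [x ->] := piN_surj a; have [y ->] := piN_surj b.
  have [z ->] := piN_surj c; by rewrite -!piN_mul (gA g).
- by move=> a; have [x ->] := piN_surj a; rewrite /eH -piN_mul (g1x g).
- by move=> a; have [x ->] := piN_surj a; rewrite /eH -piN_mul (gx1 g).
- by move=> a; have [x ->] := piN_surj a; rewrite -piN_inv -piN_mul (gVx g).
- by move=> a; have [x ->] := piN_surj a; rewrite -piN_inv -piN_mul (gxV g).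
Qed.

Lemma piN_cont : continuous piN.
Proof. exact: pi_continuous. Qed.

Lemma openHN (U : set HN) : open U <-> open (piN @^-1` U).
Proof. by []. Qed.

Lemma piN_open : open_map piN.
Proof.
move=> A oA; apply/openHN; rewrite openE => y [x Ax /piNP hxy].
have nA : nbhs (mul y (mul (inv y) x)) A by rewrite (gKl' g); exact: open_nbhs_nbhs.
change (nbhs y (piN @^-1` (piN @` A))).
have hh : nbhs y [set z | A (mul z (mul (inv y) x))] := (@rmul_cont _ _ _ _ tg (mul (inv y) x) y A nA).
apply: filterS hh => z /= Az.
exists (mul z (mul (inv y) x)) => //; apply/piNP.
by rewrite ?(ginvM g) ?(ginvK g) -?(gA g) ?(gVx g) ?(gx1 g).
Qed.

Lemma piN_ker : N = piN @^-1` [set eH].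
Proof.
apply/seteqP; split => x /=.
  by move=> Nx; apply/piNP; rewrite (gx1 g); exact: NV.
by move/piNP; rewrite (gx1 g) => /NV; rewrite (ginvK g).
Qed.

Lemma HN_closed1 : closed [set eH].
Proof.
rewrite -openC openHN.
have -> : piN @^-1` (~` [set eH]) = ~` N by rewrite piN_ker.
by apply: closed_openC.
Qed.

Lemma HN_tg : topological_group mulH invH eH.
Proof.
split; first exact: HN_group.
- move=> [a b] A /=; have [x ->] := piN_surj a; have [y ->] := piN_surj b.
  rewrite -piN_mul => nA.
  have nA' : nbhs (mul x y) (piN @^-1` A) := piN_cont nA.
  have [Q [R' [nQ nR s]]] := mul_nbhs tg nA'.
  exists (piN @` Q°, piN @` R'°) => /=.
    split => /=; apply: (@open_nbhs_nbhs HN); (split; [apply: piN_open; exact: open_interior|]).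
      by exists x.
    by exists y.
  move=> [a' b'] /= [[x' Qx' <-] [y' Ry' <-]].
  by rewrite -piN_mul; apply: s; apply: interior_subset.
- move=> a A /=; have [x ->] := piN_surj a; rewrite -piN_inv => nA.
  have nA' : nbhs (inv x) (piN @^-1` A) := piN_cont nA.
  have nI : nbhs x (inv @^-1` (piN @^-1` A)) := inv_cont tg nA'.
  have nB : nbhs (piN x) (piN @` (inv @^-1` (piN @^-1` A))°).
    by apply: (@open_nbhs_nbhs HN); split; [apply: piN_open; exact: open_interior|exists x].
  apply: filterS nB => b [x' Ix' <-] /=; rewrite -piN_inv.
  exact: (interior_subset Ix').
Qed.

Lemma HN_lindelof : lindelof G -> lindelof HN.
Proof.
move=> lG I U oU cU.
have cov : \bigcup_i (piN @^-1` U i) = setT.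
  by apply/seteqP; split => // x _; have : setT (piN x) by []; rewrite -cU => -[i _ Ui]; exists i.
have [J [cJ hJ]] := lG I (fun i => piN @^-1` U i)
  (fun i => (continuousP _).1 piN_cont _ (oU i)) cov.
exists J; split => //; apply/seteqP; split => // a _.
have [x ->] := piN_surj a; have : setT x by [].
by rewrite -hJ => -[i Ji Ui]; exists i.
Qed.

Lemma HN_bd : basically_disconnected G -> basically_disconnected HN.
Proof.
move=> bd f cf.
have cfp : continuous (f \o piN) by move=> x; apply: continuous_comp; [exact: piN_cont|exact: cf].
have oC := bd _ cfp.
have -> : closure (cozero f) = piN @` closure (cozero (f \o piN)).
  apply/seteqP; split => a.
    have [x ->] := piN_surj a => ca; exists x => // Q nQ.
    have nB : nbhs (piN x) (piN @` Q°).
      by apply: (@open_nbhs_nbhs HN); split; [apply: piN_open; exact: open_interior|exists x].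
    have [b [fb [q Qq qb]]] := ca _ nB.
    exists q; split; last exact: interior_subset.
    by apply/cozeroP; rewrite /= qb.
  case=> x cx <- P nP.
  have [z [fz Pz]] := cx _ (piN_cont nP).
  by exists (piN z); split.
exact: piN_open.
Qed.

Lemma HN_pseudo (V : nat -> set G) : (forall n, open (V n)) -> (forall n, N `<=` V n) ->
  (forall x, (forall n, V n x) -> N x) ->
  (forall n, exists m, forall a b, V m a -> N b -> V n (mul a b)) ->
  countable_pseudocharacter eH.
Proof.
move=> oV NV' VN hV.
exists (fun n => piN @` V n); split; first by move=> n; apply: piN_open.
apply/seteqP; split => a.
  by move=> -> n _; exists e => //; apply: NV'.
have [x ->] := piN_surj a => hx; rewrite /= /eH; apply/piNP; rewrite (gx1 g).
apply: NV; apply: VN => n; have [m hm] := hV n.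
have [v Vv /piNP vx] := hx m I.
by have := hm _ _ Vv vx; rewrite (gKl' g).
Qed.

Lemma HN_nondiscrete : ~ open N -> ~ discrete_top HN.
Proof. by move=> nN' dH; apply: nN'; rewrite piN_ker; apply/openHN; exact: dH. Qed.

End Quot.


Section NCons.
Context (G : topologicalType) (mul : G -> G -> G) (inv : G -> G) (e : G).
Hypothesis tg : topological_group mul inv e.
Hypothesis lG : lindelof G.
Context (Us : nat -> set G).
Hypotheses (oUs : forall m, open (Us m)) (eUs : forall m, Us m e).
Let g : is_group mul inv e. Proof. by case: tg. Qed.

Definition Psq (U V : set G) := [/\ open V, V e, forall a b, V a -> V b -> U (mul a b)
  & forall a, V a -> U (inv a)].
Definition sqf U := epsilon (inhabits setT) (Psq U).

Lemma sqf_spec U : open U -> U e -> Psq U (sqf U).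
Proof.
move=> oU Ue; apply: (epsilon_spec (inhabits setT) (Psq U)).
have nU : nbhs e U by apply: open_nbhs_nbhs.
have [V [nV sV]] := nbhs_sq tg nU.
exists (V° `&` inv @^-1` U); split.
- apply: openI; first exact: open_interior.
  by apply: open_comp => // x _; exact: (inv_cont tg).
- by split; [exact: nV|rewrite /= (ginv1 g)].
- by move=> a b [/interior_subset Va _] [/interior_subset Vb _]; exact: sV.
- by move=> a [].
Qed.

Definition Pgam U (c : nat -> set G) := (forall n, open (c n) /\ c n e) /\
  forall x, exists n, forall y, c n y -> U (mul (mul x y) (inv x)).
Definition gamf U := epsilon (inhabits (fun _ : nat => @setT G)) (Pgam U).

Lemma gamf_spec U : open U -> U e -> Pgam U (gamf U).
Proof.
move=> oU Ue; apply: (epsilon_spec _ (Pgam U)).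
have nU : nbhs e U by apply: open_nbhs_nbhs.
have [W [nW sW]] := nbhs_sq tg nU.
have [W2 [nW2 sW2]] := nbhs_sq tg nW.
pose V0 := W2 `&` W.
have nV0 : nbhs e V0 by apply: filterI.
pose V := V0 `&` [set y | V0 (inv y)].
have nV : nbhs e V by apply: filterI => //; exact: (nbhs_inv tg).
have V3 : forall a b c, V a -> V b -> V c -> U (mul a (mul b c)).
  move=> a b c [[_ Wa] _] [[W2b _] _] [[W2c _] _]; apply: sW => //; exact: sW2.
have Vsym : forall a, V a -> V (inv a).
  by move=> a [Va Via]; split => //=; rewrite (ginvK g).
pose O := V°.
have oO : open O by exact: open_interior.
have Oe : O e by [].
have cmp : forall x, continuous (fun y => mul (mul x y) (inv x)).
  move=> x y; apply: (@continuous_comp _ _ _ (mul x) (fun z => mul z (inv x))).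
    exact: (lmul_cont tg).
  exact: (rmul_cont tg).
pose Ux := fun x => [set y | O (mul y (inv x))].
have oUx : forall x, open (Ux x).
  by move=> x; apply: open_comp => // y _; exact: (rmul_cont tg).
have cov : \bigcup_x Ux x = setT.
  by apply/seteqP; split => // y _; exists y => //; rewrite /Ux /= (gxV g).
have [J [cJ hJ]] := lG oUx cov.
have [xs hxs] := countable_enum e cJ.
exists (fun n => [set y | O (mul (mul (xs n) y) (inv (xs n)))]); split.
  move=> n; split; first by apply: open_comp => // y _; exact: cmp.
  by rewrite /= (gx1 g) (gxV g).
move=> x0; have : setT x0 by [].
rewrite -hJ => -[i Ji Ui]; have [n _ ni] := hxs i Ji.
exists n => y /= Oy; rewrite ni in Oy.
have Va : V (mul x0 (inv i)) by apply: interior_subset.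
have := V3 _ _ _ Va (interior_subset Oy) (Vsym _ Va).
by rewrite ?(ginvM g) ?(ginvK g) -?(gA g) ?(gKl g).
Qed.

Definition stepf (k : nat) (U : set G) : set G :=
  if (k %% 3 == 0)%nat then sqf U
  else if (k %% 3 == 1)%nat then gamf U (k %/ 3) else Us (k %/ 3).
Definition Phi (s : seq nat) : set G := foldr stepf setT s.

Lemma Phi_spec s : open (Phi s) /\ Phi s e.
Proof.
elim: s => [|k s [oP eP]] /=; first by split; [exact: openT|].
rewrite /stepf; case: ifP => _; first by case: (sqf_spec oP eP).
case: ifP => _; last by split.
by case: (gamf_spec oP eP) => /(_ (k %/ 3)%nat).
Qed.

Lemma Phi0 s : Phi (0%nat :: s) = sqf (Phi s). Proof. by []. Qed.
Lemma Phi1 n s : Phi ((n * 3 + 1)%nat :: s) = gamf (Phi s) n.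
Proof.
rewrite /= /stepf.
have -> : ((n * 3 + 1) %% 3 == 0)%nat = false by apply/eqP; lia.
have -> : ((n * 3 + 1) %% 3 == 1)%nat = true by apply/eqP; lia.
by have -> : ((n * 3 + 1) %/ 3 = n)%nat by lia.
Qed.
Lemma Phi2 m : Phi [:: (m * 3 + 2)%nat] = Us m.
Proof.
rewrite /= /stepf.
have -> : ((m * 3 + 2) %% 3 == 0)%nat = false by apply/eqP; lia.
have -> : ((m * 3 + 2) %% 3 == 1)%nat = false by apply/eqP; lia.
by have -> : ((m * 3 + 2) %/ 3 = m)%nat by lia.
Qed.

Lemma sqPhi s : Psq (Phi s) (Phi (0%nat :: s)).
Proof. by case: (Phi_spec s) => oP eP; rewrite Phi0; exact: sqf_spec. Qed.

Definition NN := [set x | forall s, Phi s x].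

Lemma NN_normal : normal_subgroup mul inv e NN.
Proof.
split; first split.
- by move=> s; case: (Phi_spec s).
- by move=> x y Nx Ny s; case: (sqPhi s) => _ _ h _; apply: h.
- by move=> x Nx s; case: (sqPhi s) => _ _ _ h; apply: h.
move=> a x Nx s; case: (Phi_spec s) => oP eP.
have [_ /(_ a) [n hn]] := gamf_spec oP eP.
by apply: hn; have := Nx ((n * 3 + 1)%nat :: s); rewrite Phi1.
Qed.

Lemma NN_closed : closed NN.
Proof.
move=> x cx s.
have [oP2 eP2] := Phi_spec (0%nat :: 0%nat :: s).
have n2 : nbhs e (Phi (0%nat :: 0%nat :: s)) by apply: open_nbhs_nbhs.
have [k [Nk /= V2k]] := cx _ (nbhs_lmul tg x n2).
case: (sqPhi (0%nat :: s)) => _ _ _ hi.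
case: (sqPhi s) => _ _ hm _.
have := hm _ _ (Nk (0%nat :: s)) (hi _ V2k).
by rewrite ?(ginvM g) ?(ginvK g) ?(gKl' g).
Qed.

Lemma NN_sub m : NN `<=` Us m.
Proof. by move=> x Nx; rewrite -Phi2; exact: Nx. Qed.

Definition Vn (n : nat) : set G := Phi (odflt [::] (@unpickle (seq nat) n)).

Lemma Vn_open n : open (Vn n). Proof. by case: (Phi_spec (odflt [::] (@unpickle (seq nat) n))). Qed.
Lemma NN_Vn n : NN `<=` Vn n. Proof. by move=> x Nx; exact: Nx. Qed.
Lemma Vn_NN x : (forall n, Vn n x) -> NN x.
Proof. by move=> h s; have := h (pickle s); rewrite /Vn pickleK. Qed.
Lemma Vn_step n : exists m, forall a b, Vn m a -> NN b -> Vn n (mul a b).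
Proof.
exists (pickle (0%nat :: odflt [::] (@unpickle (seq nat) n))) => a b.
rewrite {1}/Vn pickleK /= => Va Nb.
case: (sqPhi (odflt [::] (@unpickle (seq nat) n))) => _ _ hm _.
by apply: hm => //; exact: Nb.
Qed.
End NCons.


Lemma notP_seq (G : topologicalType) (mul : G -> G -> G) (inv : G -> G) (e : G)
  (tg : topological_group mul inv e) : ~ P_space G ->
  exists Us : nat -> set G, [/\ forall m, open (Us m), forall m, Us m e &
    ~ nbhs e (\bigcap_m Us m)].
Proof.
move=> nP; have g : is_group mul inv e by case: tg.
have [A [[F [oF AF]] nA]] : exists A : set G, G_delta A /\ ~ open A.
  apply: contrapT => h; apply: nP => A GA; apply: contrapT => nA; apply: h; by exists A.
have [a [Aa na]] : exists a : G, A a /\ ~ nbhs a A.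
  apply: contrapT => h; apply: nA; rewrite openE => a Aa.
  by apply: contrapT => na; apply: h; exists a.
exists (fun m => [set y | F m (mul a y)]); split.
- by move=> m; apply: open_comp => // y _; exact: (lmul_cont tg).
- by move=> m /=; rewrite (gx1 g); move: Aa; rewrite AF; apply.
- move=> nI; apply: na; apply: filterS (nbhs_lmul tg a nI) => y /= hy.
  rewrite AF => m _; have /= := hy m I; by rewrite (gKl' g).
Qed.

Local Close Scope ring_scope.
Local Close Scope quotient_scope.
Unset Implicit Arguments.

Theorem theorem2 (G : topologicalType) (mul : G -> G -> G) (inv : G -> G) (e : G) :
  topological_group mul inv e ->
  hausdorff_space G ->
  lindelof G ->
  basically_disconnected G ->
  P_space G \/
  exists N : set G,
    closed N /\ normal_subgroup mul inv e N /\
    exists (H : topologicalType) (mulH : H -> H -> H) (invH : H -> H) (eH : H)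
           (f : G -> H),
      [/\ topological_group mulH invH eH,
          quotient_group_by mul mulH eH N f,
          ~ discrete_top H,
          countable_pseudocharacter eH &
          exists K : set H,
            [/\ subgroup mulH invH eH K, open K,
                boolean_set mulH eH K &
                basically_disconnected (set_type K)]].
Proof.
move=> tg hG lG bdG.
case: (pselect (P_space G)) => [P|nP]; [by left|right].
have [Us [oUs eUs nI]] := notP_seq tg nP.
pose N := NN mul inv e Us.
have cN : closed N := NN_closed tg lG oUs eUs.
have nN : normal_subgroup mul inv e N := NN_normal tg lG oUs eUs.
exists N; split => //; split => //.
have tgH := HN_tg tg nN.
have bdH := @HN_bd _ _ _ _ tg _ nN bdG.
have psH : countable_pseudocharacter (eH tg nN).
  apply: (HN_pseudo tg nN (V := Vn mul inv e Us)).
  - exact: (Vn_open tg lG oUs eUs).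
  - exact: NN_Vn.
  - exact: Vn_NN.
  - exact: (Vn_step tg lG oUs eUs).
have [K hK] := bool_subgroup tgH bdH
  (bool_nbhs tgH (@HN_lindelof _ _ _ _ tg _ nN lG) bdH (@HN_closed1 _ _ _ _ tg _ cN nN) psH).
exists (HN tg nN), (@mulH _ _ _ _ tg _ nN), (@invH _ _ _ _ tg _ nN), (eH tg nN), (piN tg nN).
split => //.
- split.
  + exact: (piN_mul tg nN).
  + exact: (@piN_cont _ _ _ _ tg _ nN).
  + exact: (piN_open tg nN).
  + by move=> y; have [x ->] := @piN_surj _ _ _ _ tg _ nN y; exists x.
  + exact: (piN_ker tg nN).
- apply: HN_nondiscrete => oN; apply: nI.
  have Ne : N e by move: (nN) => -[[]].
  have nNe : nbhs e N by apply: open_nbhs_nbhs.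
  apply: filterS nNe.
  by move=> x Nx m _; exact: (NN_sub m Nx).
- by exists K.
Qed.
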